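(* Let $t$ be a positive integer and let $G$ be a minimal counterexample to the following conjecture: every graph on $4t-1$ vertices with independence number $2$ satisfies $\mathrm{cm}(G)\ge t$. That is, $G$ has $4t-1$ vertices, $\alpha(G)=2$ and $\mathrm{cm}(G)\le t-1$, and the conjecture holds for every positive integer $t'<t$. Then $G$ contains no dominating matching.
   Context: All graphs are finite and simple. $\alpha(G)$ is the independence number. A matching $M$ in $G$ is connected if for every two edges of $M$ there is an edge of $G$ joining an endpoint of one to an endpoint of the other; $\mathrm{cm}(G)$ is the maximum size of a connected matching in $G$. A connected matching $M$ of $G$ is dominating if every edge of $M$ is adjacent to every vertex of $V(G)\setminus V(M)$, i.e. every vertex outside $V(M)$ is adjacent to at least one endpoint of each edge of $M$. *)

(* Defs.v *)
From mathcomp Require Import all_boot.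
Set Implicit Arguments. Unset Strict Implicit. Unset Printing Implicit Defensive.

Definition simple_graph (T : finType) (e : rel T) : Prop :=
  symmetric e /\ irreflexive e.

Definition independent (T : finType) (e : rel T) (S : {set T}) : bool :=
  [forall x in S, forall y in S, ~~ e x y].

Definition alpha (T : finType) (e : rel T) : nat :=
  \max_(S : {set T} | independent e S) #|S|.

Definition ends (T : finType) (p : T * T) : {set T} := [set p.1; p.2].

Definition matching (T : finType) (e : rel T) (M : {set T * T}) : bool :=
  [forall p in M, e p.1 p.2] &&
  [forall p in M, forall q in M, (p != q) ==> [disjoint ends p & ends q]].

Definition connected_matching (T : finType) (e : rel T) (M : {set T * T}) : bool :=
  matching e M &&
  [forall p in M, forall q in M,
     (p != q) ==> [exists x in ends p, exists y in ends q, e x y]].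

Definition cm (T : finType) (e : rel T) : nat :=
  \max_(M : {set T * T} | connected_matching e M) #|M|.

Definition matched_vertices (T : finType) (M : {set T * T}) : {set T} :=
  \bigcup_(p in M) ends p.

Definition dominating_matching (T : finType) (e : rel T) (M : {set T * T}) : bool :=
  connected_matching e M &&
  [forall v in ~: matched_vertices M, forall p in M, e v p.1 || e v p.2].

(* Main.v *)
Require Import Defs.
From mathcomp Require Import all_boot zify.
Set Implicit Arguments. Unset Strict Implicit.

Lemma disj2 (T : finType) (a b c d : T) :
  [disjoint [set a; b] & [set c; d]] = [&& a != c, a != d, b != c & b != d].
Proof.
apply/idP/idP.
- move=> D.
  have Ha : a \notin [set c; d] by rewrite (disjointFr D) // !inE eqxx.
  have Hb : b \notin [set c; d] by rewrite (disjointFr D) // !inE eqxx orbT.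
  by move: Ha Hb; rewrite !inE !negb_or => /andP[-> ->] /andP[-> ->].
- case/and4P=> h1 h2 h3 h4; rewrite disjoint_subset; apply/subsetP => x.
  by rewrite !inE => /orP[]/eqP->; rewrite negb_or ?h1 ?h2 ?h3 ?h4.
Qed.

Lemma ex2 (T : finType) (e : rel T) (p q : T * T) :
  [exists x in ends p, exists y in ends q, e x y] =
  [|| e p.1 q.1, e p.1 q.2, e p.2 q.1 | e p.2 q.2].
Proof.
apply/idP/idP.
- case/existsP => x /andP[]; rewrite /ends !inE => /orP[]/eqP->
    /existsP[y /andP[]]; rewrite !inE => /orP[]/eqP-> ->; rewrite ?orbT //.
- case/or4P => H; apply/existsP; [exists p.1|exists p.1|exists p.2|exists p.2];
  rewrite /ends !inE eqxx ?orbT /=; apply/existsP;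
  [exists q.1|exists q.2|exists q.1|exists q.2]; rewrite !inE eqxx ?orbT //.
Qed.

Definition CM (T : finType) (e : rel T) (M : {set T * T}) : Prop :=
  [/\ (forall p, p \in M -> e p.1 p.2),
      (forall p q, p \in M -> q \in M -> p != q ->
         [&& p.1 != q.1, p.1 != q.2, p.2 != q.1 & p.2 != q.2]) &
      (forall p q, p \in M -> q \in M -> p != q ->
         [|| e p.1 q.1, e p.1 q.2, e p.2 q.1 | e p.2 q.2])].

Lemma CMP (T : finType) (e : rel T) M : connected_matching e M <-> CM e M.
Proof.
rewrite /connected_matching /matching /CM; split.
- case/andP=> /andP[/forallP H1 /forallP H2] /forallP H3; split.
  + by move=> p pM; exact: (implyP (H1 p) pM).
  + move=> p q pM qM pq.
    have := implyP (forallP (implyP (H2 p) pM) q) qM.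
    by move/implyP/(_ pq); rewrite /ends disj2.
  + move=> p q pM qM pq.
    have := implyP (forallP (implyP (H3 p) pM) q) qM.
    by move/implyP/(_ pq); rewrite ex2.
- case=> H1 H2 H3; apply/andP; split; [apply/andP; split|].
  + by apply/forallP => p; apply/implyP; apply: H1.
  + apply/forallP => p; apply/implyP => pM; apply/forallP => q; apply/implyP => qM.
    by apply/implyP => pq; rewrite /ends disj2; apply: H2.
  + apply/forallP => p; apply/implyP => pM; apply/forallP => q; apply/implyP => qM.
    by apply/implyP => pq; rewrite ex2; apply: H3.
Qed.

Lemma CM_map (T T' : finType) (e : rel T) (e' : rel T') (g : T' -> T) :
  injective g -> (forall x y, e' x y = e (g x) (g y)) -> forall M', CM e' M' ->
  CM e [set (g p.1, g p.2) | p in M'] /\ #|[set (g p.1, g p.2) | p in M']| = #|M'|.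
Proof.
move=> ig ee M' [H1 H2 H3]; split; last first.
  apply: card_imset => -[a b] [c d] /= [] /ig -> /ig -> //.
have neq : forall p q, (g p.1, g p.2) != (g q.1, g q.2) -> p != q.
  by move=> p q; apply: contra => /eqP ->.
split.
- by move=> _ /imsetP[p pM ->] /=; rewrite -ee; apply: H1.
- move=> _ _ /imsetP[p pM ->] /imsetP[q qM ->] /neq pq /=.
  rewrite !(inj_eq ig); apply: H2 => //.
- move=> _ _ /imsetP[p pM ->] /imsetP[q qM ->] /neq pq /=.
  by rewrite -!ee; apply: H3.
Qed.

Lemma inV (T : finType) (M : {set T * T}) p : p \in M ->
  p.1 \in matched_vertices M /\ p.2 \in matched_vertices M.
Proof.
by move=> pM; split; apply/bigcupP; exists p; rewrite // /ends !inE eqxx ?orbT.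
Qed.

Lemma CM_union (T : finType) (e : rel T) (M M2 : {set T * T}) :
  symmetric e -> CM e M ->
  (forall v, v \notin matched_vertices M -> forall p, p \in M -> e v p.1 || e v p.2) ->
  CM e M2 ->
  (forall p, p \in M2 -> p.1 \notin matched_vertices M /\ p.2 \notin matched_vertices M) ->
  CM e (M :|: M2) /\ #|M :|: M2| = #|M| + #|M2|.
Proof.
move=> sym [H1 H2 H3] dom [K1 K2 K3] out.
have nin : forall x y, x \in matched_vertices M -> y \notin matched_vertices M -> x != y.
  by move=> x y xV; apply: contra => /eqP <-.
split; last first.
  rewrite cardsU.
  suff -> : M :&: M2 = set0 by rewrite cards0 subn0.
  apply/setP => p; rewrite !inE; apply/negbTE/negP => /andP[pM pM2].
  by have := (out p pM2).1; rewrite (inV pM).1.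
split.
- by move=> p; rewrite inE => /orP[]; [apply: H1|apply: K1].
- move=> p q; rewrite !inE => /orP[pM|pM] /orP[qM|qM] pq.
  + exact: H2.
  + have [a b] := inV pM; have [c d] := out q qM.
    by rewrite !nin.
  + have [a b] := out p pM; have [c d] := inV qM.
    by rewrite !(eq_sym p.1) !(eq_sym p.2) !nin.
  + exact: K2.
- move=> p q; rewrite !inE => /orP[pM|pM] /orP[qM|qM] pq.
  + exact: H3.
  + have [c d] := out q qM.
    move: (dom _ c _ pM); rewrite (sym q.1 p.1) (sym q.1 p.2).
    by case/orP => ->; rewrite ?orbT.
  + have [a b] := out p pM.
    by move: (dom _ a _ qM); case/orP => ->; rewrite ?orbT.
  + exact: K3.
Qed.

Lemma clique_match (T : finType) (e : rel T) k : forall W : {set T},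
  2 * k <= #|W| -> (forall x y, x \in W -> y \in W -> x != y -> e x y) ->
  exists M2, [/\ CM e M2, #|M2| = k & forall p, p \in M2 -> p.1 \in W /\ p.2 \in W].
Proof.
elim: k => [|k IH] W cW cl.
  exists set0; split; rewrite ?cards0 //; last by move=> p; rewrite inE.
  by split=> p; rewrite inE.
have : 0 < #|W| by lia.
case/card_gt0P => x xW.
have : 0 < #|W :\ x| by rewrite (cardsD1 x W) xW in cW; lia.
case/card_gt0P => y yW'.
set W' := W :\ x :\ y.
have cW' : #|W| = (#|W'|).+2.
  by rewrite (cardsD1 x W) xW (cardsD1 y (W :\ x)) yW'.
have inW' : forall z, z \in W' -> [/\ z != y, z != x & z \in W].
  by move=> z; rewrite !inE => /and3P[].
have [yx yW] : y != x /\ y \in W by move: yW'; rewrite !inE => /andP[].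
have [M0 [[H1 H2 H3] cM0 sM0]] : exists M2, [/\ CM e M2, #|M2| = k &
    forall p, p \in M2 -> p.1 \in W' /\ p.2 \in W'].
  apply: IH; first by lia.
  by move=> a b /inW'[_ _ a1] /inW'[_ _ b1]; apply: cl.
have xM0 : (x, y) \notin M0.
  by apply/negP => /sM0 [/inW'[_ /eqP]].
exists ((x, y) |: M0); split.
- split.
  + move=> p; rewrite in_setU1 => /orP[/eqP->|]; last exact: H1.
    by apply: cl; rewrite // eq_sym.
  + move=> p q; rewrite !in_setU1 => /orP[/eqP->|pM] /orP[/eqP->|qM] pq.
    * by rewrite eqxx in pq.
    * have [/inW'[a1 a2 _] /inW'[b1 b2 _]] := sM0 q qM.
      by rewrite /= !(eq_sym x) !(eq_sym y) a1 a2 b1 b2.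
    * have [/inW'[a1 a2 _] /inW'[b1 b2 _]] := sM0 p pM.
      by rewrite /= a1 a2 b1 b2.
    * exact: H2.
  + move=> p q; rewrite !in_setU1 => /orP[/eqP->|pM] /orP[/eqP->|qM] pq.
    * by rewrite eqxx in pq.
    * have [/inW'[a1 a2 a3] _] := sM0 q qM.
      by rewrite /= cl // eq_sym.
    * have [/inW'[a1 a2 a3] _] := sM0 p pM.
      by rewrite /= cl.
    * exact: H3.
- by rewrite cardsU1 xM0 cM0.
- move=> p; rewrite in_setU1 => /orP[/eqP->//|/sM0[/inW'[_ _ ->] /inW'[_ _ ->]]] //.
Qed.

Lemma subset_card (T : finType) (A : {set T}) n :
  n <= #|A| -> exists B : {set T}, B \subset A /\ #|B| = n.
Proof.
elim: n => [|n IH] h; first by exists set0; rewrite sub0set cards0.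
have [B [BA cB]] := IH (ltnW h).
have : 0 < #|A :\: B| by rewrite cardsD (setIidPr BA) cB; lia.
case/card_gt0P => x; rewrite inE => /andP[xB xA].
by exists (x |: B); rewrite subUset sub1set xA BA cardsU1 xB cB.
Qed.

Lemma V_bound (T : finType) (M : {set T * T}) :
  #|matched_vertices M| <= 2 * #|M|.
Proof.
have sub : matched_vertices M \subset
    [set p.1 | p in M] :|: [set p.2 | p in M].
  apply/subsetP => x /bigcupP[p pM]; rewrite /ends !inE => /orP[]/eqP->.
  + by rewrite ?inE; apply/orP; left; apply/imsetP; exists p.
  + by rewrite ?inE; apply/orP; right; apply/imsetP; exists p.
apply: leq_trans (subset_leq_card sub) _.
apply: leq_trans (leq_card_setU _ _) _.
by rewrite mul2n -addnn leq_add ?leq_imset_card.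
Qed.

Lemma alpha_sub (T T' : finType) (e : rel T) (e' : rel T') (g : T' -> T) :
  injective g -> (forall x y, e' x y = e (g x) (g y)) -> alpha e' <= alpha e.
Proof.
move=> ig ee; apply/bigmax_leqP => S indS.
have ind : independent e (g @: S).
  apply/forallP => a; apply/implyP => /imsetP[x xS ->].
  apply/forallP => b; apply/implyP => /imsetP[y yS ->].
  rewrite -ee; exact: (implyP (forallP (implyP (forallP indS x) xS) y) yS).
have := @leq_bigmax_cond _ (independent e) (fun S : {set T} => #|S|) _ ind.
by rewrite card_imset.
Qed.

Lemma alpha_clique (T : finType) (e : rel T) : simple_graph e -> alpha e <= 1 ->
  forall x y, x != y -> e x y.
Proof.
move=> [sym irr] a1 x y xy.
case exy: (e x y) => //.
have ind : independent e [set x; y].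
  apply/forallP => a; apply/implyP; rewrite !inE => /orP[]/eqP->;
  apply/forallP => b; apply/implyP; rewrite !inE => /orP[]/eqP->;
  by rewrite ?irr ?exy // sym exy.
have := @leq_bigmax_cond _ (independent e) (fun S : {set T} => #|S|) _ ind.
rewrite cards2 xy => h; move: (leq_trans h a1); done.
Qed.

Theorem lemma2p7 (t : nat) (T : finType) (e : rel T) :
  0 < t ->
  simple_graph e ->
  #|T| = 4 * t - 1 ->
  alpha e = 2 ->
  cm e <= t - 1 ->
  (forall t' : nat, 0 < t' -> t' < t ->
     forall (T' : finType) (e' : rel T'),
       simple_graph e' -> #|T'| = 4 * t' - 1 -> alpha e' = 2 -> t' <= cm e') ->
  ~ (exists M : {set T * T}, (M != set0) && dominating_matching e M).
Proof.
move=> t0 sg cardT a2 cmle hyp [M /andP[M0 dom]].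
have [sym irr] := sg.
move: dom; rewrite /dominating_matching => /andP[cmM /forallP domM].
have domP : forall v, v \notin matched_vertices M -> forall p, p \in M -> e v p.1 || e v p.2.
  move=> v vV p pM; have := implyP (domM v); rewrite inE vV => /(_ isT) /forallP /(_ p) /implyP.
  by apply.
have CMM := (CMP e M).1 cmM.
have m0 : 0 < #|M| by rewrite card_gt0.
have mle : #|M| <= t - 1 :=
  leq_trans (@leq_bigmax_cond _ (connected_matching e) (fun M => #|M|) _ cmM) cmle.
have cV := V_bound M.
have cC : 4 * (t - #|M|) - 1 <= #|~: matched_vertices M|.
  have := cardsC (matched_vertices M); rewrite cardT; lia.
have [W [WV cW]] := subset_card cC.
have WnV : forall x, x \in W -> x \notin matched_vertices M.
  by move=> x /(subsetP WV); rewrite inE.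
have [M2 [CM2 cM2 sM2]] : exists M2, [/\ CM e M2, t - #|M| <= #|M2| &
    forall p, p \in M2 -> p.1 \in W /\ p.2 \in W].
  pose T' : finType := {x : T | x \in W}.
  pose e' := [rel x y : T' | e (val x) (val y)].
  have al : alpha e' <= 2.
    by rewrite -a2; apply: (alpha_sub (g := val)) => //; exact: val_inj.
  have sg' : simple_graph e'.
    by split; [move=> x y; exact: sym | move=> x; exact: irr].
  have cT' : #|T'| = 4 * (t - #|M|) - 1 by rewrite card_sig -cW; apply: eq_card.
  case: (eqVneq (alpha e') 2) => ha.
  - have h := hyp (t - #|M|) ltac:(lia) ltac:(lia) T' e' sg' cT' ha.
    have [M' cM' sM'] : exists2 M', connected_matching e' M' & t - #|M| <= #|M'|.
      case: (boolP [exists M' : {set T' * T'}, connected_matching e' M' && (t - #|M| <= #|M'|)]).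
        by case/existsP => M' /andP[]; exists M'.
      rewrite negb_exists => /forallP nM.
      have : cm e' <= t - #|M| - 1.
        apply/bigmax_leqP => M' cM'; have := nM M'; rewrite cM' /= -ltnNge; lia.
      lia.
    have [CMg cg] := CM_map (g := val) val_inj (fun x y => erefl) ((CMP e' M').1 cM').
    exists [set (val p.1, val p.2) | p in M']; split => //; first by rewrite cg.
    by move=> _ /imsetP[p _ ->]; split; exact: valP.
  - have a1 : alpha e' <= 1 by move: al; rewrite leq_eqVlt (negbTE ha).
    have cl := alpha_clique sg' a1.
    have [M2 [C2 c2 s2]] := @clique_match T e (t - #|M|) W ltac:(lia)
      (fun x y xW yW xy => cl (exist _ x xW) (exist _ y yW)
         ltac:(by apply: contra xy => /eqP [->])).
    by exists M2; split; rewrite ?c2.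
have [CMU cU] := CM_union sym CMM domP CM2
  (fun p pM2 => let: conj a b := sM2 p pM2 in conj (WnV _ a) (WnV _ b)).
have := @leq_bigmax_cond _ (connected_matching e) (fun M => #|M|) _ ((CMP e _).2 CMU).
rewrite cU => h; have := leq_trans h cmle; lia.
Qed.
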